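(* Let $\mathbb{F}$ be a field with $\mathrm{char}(\mathbb{F})\neq 2,3$, let $k\in\mathbb{N}$ and $\beta_3,\dots,\beta_{3k}\in\mathbb{F}$ with $\beta_{3k}\neq0$, and let $x=\sum_{j=1}^k\beta_{3j}p_{\bar1,3j}$. Then the ideal $I=(x)$ of $\hat{\mathcal{H}}$ generated by $x$ has basis $$x,\quad x^{\tau_0},\quad s_ix,\quad (s_ix)^{\tau_0}\qquad (i\in3\mathbb{N}).$$
   Context: Notation: $\mathbb{N}=\{1,2,3,\dots\}$, $3\mathbb{N}=\{3,6,9,\dots\}$; for $r\in\mathbb{Z}$, $\bar r=r+3\mathbb{Z}\in\mathbb{Z}_3$. The algebra $\hat{\mathcal{H}}$ is the commutative $\mathbb{F}$-algebra with basis $\{a_i:i\in\mathbb{Z}\}\cup\{s_j:j\in\mathbb{N}\}\cup\{p_{\bar r,k}:\bar r\in\{\bar1,\bar2\},\ k\in 3\mathbb{N}\}$, where $s_0=0$, $p_{\bar r,j}=0$ for all $\bar r$ whenever $j\notin 3\mathbb{N}$, $p_{\bar 0,j}=-p_{\bar1,j}-p_{\bar2,j}$, $z_{\bar r,j}=p_{\bar r+\bar1,j}-p_{\bar r-\bar1,j}$, and for $i,i'\in\mathbb{Z}$, $j,l\in\mathbb{N}$, $h,k\in3\mathbb{N}$, $\bar r,\bar t\in\mathbb{Z}_3$: (H1) $a_ia_{i'}=\tfrac12(a_i+a_{i'})+s_{|i-i'|}+z_{\bar\imath,|i-i'|}$; (H2) $a_is_j=-\tfrac34a_i+\tfrac38(a_{i-j}+a_{i+j})+\tfrac32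 s_j-z_{\bar\imath,j}$; (H3) $a_ip_{\bar r,k}=\tfrac32p_{\bar r,k}-p_{-(\bar\imath+\bar r),k}$; (H4) $s_js_l=\tfrac34(s_j+s_l)-\tfrac38(s_{|j-l|}+s_{j+l})$; (H5) $s_jp_{\bar r,k}=\tfrac34(p_{\bar r,j}+p_{\bar r,k})-\tfrac38(p_{\bar r,|j-k|}+p_{\bar r,j+k})$; (H6) $p_{\bar r,h}p_{\bar t,k}=\tfrac14(z_{-(\bar r+\bar t),h}+z_{-(\bar r+\bar t),k})-\tfrac18(z_{-(\bar r+\bar t),|h-k|}+z_{-(\bar r+\bar t),h+k})$. $\tau_0$ denotes the automorphism of $\hat{\mathcal{H}}$ given by $a_i\mapsto a_{-i}$, $s_j\mapsto s_j$, $p_{\bar r,k}\mapsto -p_{-\bar r,k}$, and $y^{\tau_0}$ is the image of $y$. *)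

(* Defs.v *)
From HB Require Import structures.
From mathcomp Require Import all_boot all_order all_algebra.
From mathcomp Require Import finmap.
From mathcomp Require Import monalg.
Set Implicit Arguments. Unset Strict Implicit. Unset Printing Implicit Defensive.
Import Order.TTheory GRing.Theory Num.Theory.
Local Open Scope ring_scope.

(* Basis index of \hat H:
     inl (inl i)      <-> a_i            (i : int)
     inl (inr n)      <-> s_(n+1)        (so every j in N = {1,2,...})
     inr (true, n)    <-> p_(1bar, 3(n+1))
     inr (false, n)   <-> p_(2bar, 3(n+1))                              *)
Definition HB : choiceType := ((int + nat) + (bool * nat))%type.

Section Highwater.
Variable F : fieldType.

Definition Hh := {malg F[HB]}.

Definition bvec (b : HB) : Hh := << b >>.

Definition ha (i : int) : Hh := bvec (inl (inl i)).
(* s_j, with the convention s_0 = 0 *)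
Definition hs (j : nat) : Hh := if j == 0%N then 0 else bvec (inl (inr j.-1)).
(* p_(rbar, j) for r : int read modulo 3; p_(rbar,j) = 0 unless j in 3N,
   and p_(0bar,j) = - p_(1bar,j) - p_(2bar,j) *)
Definition hp (r : int) (j : nat) : Hh :=
  if (0 < j)%N && (3 %| j)%N then
    let p1 := bvec (inr (true, (j %/ 3).-1)) in
    let p2 := bvec (inr (false, (j %/ 3).-1)) in
    if (r %% 3)%Z == 1 then p1
    else if (r %% 3)%Z == 2 then p2
    else - p1 - p2
  else 0.
Definition hz (r : int) (j : nat) : Hh := hp (r + 1) j - hp (r - 1) j.

Definition absz_diff (i i' : int) : nat := `|i - i'|%N.
Definition pidx (b : bool) : int := if b then 1 else 2.

Definition half : F := 2%:R^-1.

(* products of basis elements, (H1)-(H6) *)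
Definition bmul (b c : HB) : Hh :=
  match b, c with
  | inl (inl i), inl (inl i') =>
      half *: (ha i + ha i') + hs (absz_diff i i') + hz i (absz_diff i i')
  | inl (inl i), inl (inr n) | inl (inr n), inl (inl i) =>
      let j := n.+1 in
      - ((3%:R / 4%:R) *: ha i)
      + (3%:R / 8%:R) *: (ha (i - j%:Z) + ha (i + j%:Z))
      + (3%:R / 2%:R) *: hs j - hz i j
  | inl (inl i), inr (b, n) | inr (b, n), inl (inl i) =>
      let k := (3 * n.+1)%N in
      (3%:R / 2%:R) *: hp (pidx b) k - hp (- (i + pidx b)) k
  | inl (inr n), inl (inr m) =>
      let j := n.+1 in let l := m.+1 in
      (3%:R / 4%:R) *: (hs j + hs l)
      - (3%:R / 8%:R) *: (hs (absz_diff j l) + hs (j + l))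
  | inl (inr n), inr (b, m) | inr (b, m), inl (inr n) =>
      let j := n.+1 in let k := (3 * m.+1)%N in let r := pidx b in
      (3%:R / 4%:R) *: (hp r j + hp r k)
      - (3%:R / 8%:R) *: (hp r (absz_diff j k) + hp r (j + k))
  | inr (b, n), inr (c, m) =>
      let h := (3 * n.+1)%N in let k := (3 * m.+1)%N in
      let u := - (pidx b + pidx c) in
      (4%:R^-1) *: (hz u h + hz u k)
      - (8%:R^-1) *: (hz u (absz_diff h k) + hz u (h + k))
  end.

Definition hmul (u v : Hh) : Hh :=
  \sum_(b <- msupp u) \sum_(c <- msupp v) (u@_b * v@_c) *: bmul b c.

Definition btau (b : HB) : Hh :=
  match b with
  | inl (inl i) => ha (- i)
  | inl (inr n) => bvec (inl (inr n))
  | inr (b, n) => - bvec (inr (~~ b, n))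
  end.
Definition htau (u : Hh) : Hh := \sum_(b <- msupp u) u@_b *: btau b.

(* ideals of the (commutative, possibly non-unital) algebra \hat H *)
Definition is_ideal (J : Hh -> Prop) : Prop :=
  [/\ J 0,
      (forall u v, J u -> J v -> J (u + v)),
      (forall (c : F) u, J u -> J (c *: u)) &
      (forall u v, J u -> J (hmul v u))].

Definition gen_ideal (x : Hh) (y : Hh) : Prop :=
  forall J, is_ideal J -> J x -> J y.

Definition lin_indep (I : eqType) (f : I -> Hh) : Prop :=
  forall (l : seq I) (c : I -> F), uniq l ->
    \sum_(t <- l) c t *: f t = 0 -> forall t, t \in l -> c t = 0.

Definition in_span (I : eqType) (f : I -> Hh) (y : Hh) : Prop :=
  exists (l : seq I) (c : I -> F), y = \sum_(t <- l) c t *: f t.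

Definition is_basis_of_ideal (I : eqType) (f : I -> Hh) (x : Hh) : Prop :=
  lin_indep f /\ (forall y, in_span f y <-> gen_ideal x y).

(* the family x, x^tau0, s_i x, (s_i x)^tau0 (i in 3N);
   index (false/true, None) -> x / x^tau0,
         (false/true, Some n) -> s_(3(n+1)) x / (s_(3(n+1)) x)^tau0 *)
Definition ideal_family (x : Hh) (t : bool * option nat) : Hh :=
  let y := match t.2 with
           | None => x
           | Some n => hmul (hs (3 * n.+1)) x
           end in
  if t.1 then htau y else y.

End Highwater.

(* Main.v *)
Require Import Defs.
From HB Require Import structures.
From mathcomp Require Import all_boot all_order all_algebra.
From mathcomp Require Import finmap monalg.
From mathcomp Require Import zify ring.
Import Order.TTheory GRing.Theory Num.Theory.
Local Open Scope ring_scope.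
Set Implicit Arguments. Unset Strict Implicit. Unset Printing Implicit Defensive.

Lemma msetN (a b d x1 x2 x3 y1 y2 y3 : nat) : (
  x1 = (a - (b - d + (d - b)) + (b - d + (d - b) - a)) ->
  x2 = a + (b - d + (d - b)) ->
  x3 = (a - (b + d) + (b + d - a)) ->
  y1 = ((a - b + (b - a)) - d + (d - (a - b + (b - a)))) ->
  y2 = (a - b + (b - a)) + d ->
  y3 = (a + b - d + (d - (a + b))) ->
  (x1 = y1 /\ x2 = y2 /\ x3 = y3) \/ (x1 = y1 /\ x2 = y3 /\ x3 = y2) \/
  (x1 = y2 /\ x2 = y1 /\ x3 = y3) \/ (x1 = y2 /\ x2 = y3 /\ x3 = y1) \/
  (x1 = y3 /\ x2 = y1 /\ x3 = y2) \/ (x1 = y3 /\ x2 = y2 /\ x3 = y1))%N.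
Proof.
move=> -> -> -> -> -> ->.
case: (leqP a b) => h1; case: (leqP b d) => h2; case: (leqP a d) => h3;

 first [ left; lia | right; left; lia | right; right; left; lia | right; right; right; left; lia
       | right; right; right; right; left; lia | right; right; right; right; right; lia ].
Qed.

Section Work.
Variable F : fieldType.
Local Notation H := (Hh F).

Ltac coeff k E :=
  lazymatch E with
  | ?x + ?y => let p1 := coeff k x in let p2 := coeff k y in
      constr:(eq_trans (mcoeffD k x y) (f_equal2 (fun a b => a + b) p1 p2))
  | - ?x => let p := coeff k x in
      constr:(eq_trans (mcoeffN k x) (f_equal (fun a => - a) p))
  | ?c *: ?x => let p := coeff k x in
      constr:(eq_trans (mcoeffZ c x k) (f_equal (fun a => c * a) p))
  | 0 => constr:((mcoeff0 k) : mcoeff k E = 0)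
  | _ => constr:(erefl (mcoeff k E))
  end.
Ltac mco := apply/malgP => ?;
  match goal with |- mcoeff ?k ?L = mcoeff ?k ?R =>
    let pL := coeff k L in let pR := coeff k R in
    refine (eq_trans pL (eq_trans _ (esym pR))) end.
Ltac genco := repeat match goal with |- context [@mcoeff ?K ?G ?k ?X] =>
   let y := fresh "y" in generalize (@mcoeff K G k X) => y end.
Ltac mring := mco; genco; ring.

Definition lext (G : HB -> H) (v : H) : H := \sum_(b <- msupp v) v@_b *: G b.

Lemma lext_supp G v (S : seq HB) : uniq S -> {subset msupp v <= S} ->
  lext G v = \sum_(b <- S) v@_b *: G b.
Proof.
move=> uS sub; rewrite /lext [RHS](bigID (mem (msupp v))) /=.
rewrite [X in _ + X]big1 ?addr0; last first.
  by move=> b hb; rewrite mcoeff_outdom ?scale0r.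
rewrite -[RHS]big_filter; apply: perm_big; apply: uniq_perm.
- exact: fset_uniq.
- exact: filter_uniq.
by move=> b; rewrite mem_filter; case hb: (b \in msupp v) => //=; rewrite sub.
Qed.

Lemma lextD G u v : lext G (u + v) = lext G u + lext G v.
Proof.
set S := undup (msupp u ++ msupp v ++ msupp (u + v)).
have uS : uniq S by exact: undup_uniq.
rewrite (@lext_supp G (u+v) S) // ?(@lext_supp G u S) ?(@lext_supp G v S) //.
- by rewrite -big_split; apply: eq_bigr => b _; rewrite mcoeffD scalerDl.
- by move=> b hb; rewrite mem_undup !mem_cat hb ?orbT.
- by move=> b hb; rewrite mem_undup !mem_cat hb ?orbT.
- by move=> b hb; rewrite mem_undup !mem_cat hb ?orbT.
Qed.

Lemma lextZ G c v : lext G (c *: v) = c *: lext G v.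
Proof.
rewrite (@lext_supp G (c *: v) (msupp v)) ?fset_uniq //.
  by rewrite /lext scaler_sumr; apply: eq_bigr => b _; rewrite mcoeffZ scalerA.
by apply/fsubsetP; apply: msuppZ_le.
Qed.

Lemma lext0 G : lext G 0 = 0.
Proof. by rewrite /lext msupp0 big_nil. Qed.

Lemma lext_bvec G b : lext G (bvec F b) = G b.
Proof.
rewrite (@lext_supp G _ [:: b]) //; last first.
  by move=> c; rewrite /bvec msuppU oner_eq0 !inE.
by rewrite big_seq1 /bvec mcoeffU eqxx mulr1n scale1r.
Qed.

Lemma lextG G1 G2 c v : lext (fun b => c *: G1 b + G2 b) v = c *: lext G1 v + lext G2 v.
Proof.
by rewrite /lext scaler_sumr -big_split; apply: eq_bigr => b _; rewrite scalerDr !scalerA mulrC.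
Qed.

Lemma lext_eq G1 G2 v : (forall b, v@_b != 0 -> G1 b = G2 b) -> lext G1 v = lext G2 v.
Proof.
move=> h; apply: eq_big_seq => b hb; rewrite h // mcoeff_neq0 //.
Qed.

Definition isLin (f : H -> H) := forall c u v, f (c *: u + v) = c *: f u + f v.

Lemma isLin_lext G : isLin (lext G).
Proof. by move=> c u v; rewrite lextD lextZ. Qed.

Lemma lin0 f : isLin f -> f 0 = 0.
Proof.
move=> h; have := h 1 0 0; rewrite !scale1r addr0 => e.
by apply: (addrI (f 0)); rewrite addr0 -e.
Qed.
Lemma linD f : isLin f -> forall u v, f (u + v) = f u + f v.
Proof. by move=> h u v; have := h 1 u v; rewrite !scale1r. Qed.
Lemma linZ f : isLin f -> forall c u, f (c *: u) = c *: f u.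
Proof. by move=> h c u; rewrite -[c *: u]addr0 h lin0 // addr0. Qed.
Lemma linN f : isLin f -> forall u, f (- u) = - f u.
Proof. by move=> h u; rewrite -scaleN1r linZ // scaleN1r. Qed.
Lemma linB f : isLin f -> forall u v, f (u - v) = f u - f v.
Proof. by move=> h u v; rewrite linD // linN. Qed.
Lemma lin_sum f (I : Type) (s : seq I) (g : I -> H) : isLin f ->
  f (\sum_(i <- s) g i) = \sum_(i <- s) f (g i).
Proof.
move=> h; elim: s => [|a s IH]; first by rewrite !big_nil lin0.
by rewrite !big_cons linD // IH.
Qed.

Lemma bvecZ c b : << c *g b >> = c *: bvec F b.
Proof. by apply/malgP => k; rewrite mcoeffZ /bvec !mcoeffU mulr_natr. Qed.

Lemma lin_ext f : isLin f -> forall v, f v = lext (fun b => f (bvec F b)) v.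
Proof.
move=> h v; rewrite {1}(monalgE v) lin_sum //; apply: eq_bigr => b _.
by rewrite bvecZ linZ.
Qed.

Definition C1 (v : H) := forall b, v@_b != 0 -> exists n, b = inr (true, n).

Lemma C1_ext f g : isLin f -> isLin g ->
  (forall n, f (bvec F (inr (true, n))) = g (bvec F (inr (true, n)))) ->
  forall v, C1 v -> f v = g v.
Proof.
move=> hf hg he v hv; rewrite (lin_ext hf) (lin_ext hg); apply: lext_eq => b hb.
by case: (hv b hb) => n ->.
Qed.

Lemma C1D u v : C1 u -> C1 v -> C1 (u + v).
Proof.
move=> hu hv b; rewrite mcoeffD; case: (eqVneq u@_b 0) => [->|/hu //].
by rewrite add0r => /hv.
Qed.
Lemma C1Z c u : C1 u -> C1 (c *: u).
Proof. by move=> hu b; rewrite mcoeffZ; case: (eqVneq u@_b 0) => [->|/hu //]; rewrite mulr0 eqxx. Qed.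
Lemma C10 : C1 0.
Proof. by move=> b; rewrite mcoeff0 eqxx. Qed.
Lemma C1N u : C1 u -> C1 (- u).
Proof. by move=> h; rewrite -scaleN1r; apply: C1Z. Qed.
Lemma C1B u v : C1 u -> C1 v -> C1 (u - v).
Proof. by move=> hu hv; apply: C1D => //; apply: C1N. Qed.
Lemma C1_sum (I : Type) (s : seq I) (g : I -> H) : (forall i, C1 (g i)) -> C1 (\sum_(i <- s) g i).
Proof. by move=> h; elim: s => [|a s IH]; rewrite ?big_nil ?big_cons; [exact: C10| apply: C1D]. Qed.

Lemma hmulE u v : hmul u v = lext (fun b => lext (bmul F b) v) u.
Proof.
rewrite /hmul /lext; apply: eq_bigr => b _; rewrite scaler_sumr.
by apply: eq_bigr => c _; rewrite scalerA.
Qed.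

Lemma isLin_hmul u : isLin (hmul u).
Proof.
move=> c v w; rewrite !hmulE -lextG; apply: lext_eq => b _.
by rewrite lextD lextZ.
Qed.

Lemma isLin_hmull v : isLin (fun u : H => hmul u v).
Proof. by move=> c u w; rewrite !hmulE isLin_lext. Qed.

Lemma hmul_bvec b v : hmul (bvec F b) v = lext (bmul F b) v.
Proof. by rewrite hmulE lext_bvec. Qed.

Lemma hmul_bb b c : hmul (bvec F b) (bvec F c) = bmul F b c.
Proof. by rewrite hmul_bvec lext_bvec. Qed.

Lemma hmul0l (v : H) : hmul 0 v = 0.
Proof. by rewrite hmulE lext0. Qed.

Lemma htauE : @htau F = lext (btau F).
Proof. by []. Qed.


Variable h2 : (2%:R : F) != 0.
Variable h3 : (3%:R : F) != 0.
Lemma h4 : (4%:R : F) != 0.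
Proof. by rewrite (_ : 4 = 2 * 2)%N // natrM mulf_neq0. Qed.
Lemma h8 : (8%:R : F) != 0.
Proof. by rewrite (_ : 8 = 2 * 4)%N // natrM mulf_neq0 // h4. Qed.

Ltac mfield := mco; genco; field;
  rewrite ?h2 ?h3 ?h4 ?h8 //.

Goal forall v : H, (3%:R / 4%:R) *: v - (3%:R/8%:R) *: (v + v) = 0.
Proof. move=> v. mfield. Qed.

Definition hq := locked (hp F).
Lemma hqE : hp F = hq.
Proof. by rewrite /hq -lock. Qed.
Definition dn := locked (fun a b : nat => (a - b + (b - a))%N).
Lemma dnE a b : dn a b = (a - b + (b - a))%N.
Proof. by rewrite /dn -lock. Qed.
Lemma absz_diffE (a b : nat) : absz_diff a b = dn a b.
Proof. rewrite dnE /absz_diff; lia. Qed.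

Lemma hq_res (r s : int) j : (r %% 3 = s %% 3)%Z -> hq r j = hq s j.
Proof. by move=> e; rewrite -hqE /hp e. Qed.
Lemma hq_r1 (r : int) : (r %% 3 = 1)%Z -> forall j, hq r j = hq 1 j.
Proof. by move=> e j; apply: hq_res; rewrite e. Qed.
Lemma hq_r2 (r : int) : (r %% 3 = 2)%Z -> forall j, hq r j = hq 2 j.
Proof. by move=> e j; apply: hq_res; rewrite e. Qed.
Lemma hq_r0 (r : int) : (r %% 3 = 0)%Z -> forall j, hq r j = - hq 1 j - hq 2 j.
Proof.
move=> e j; rewrite -hqE /hp e /=; case: ifP => _ //=.
by rewrite oppr0 addr0.
Qed.
Lemma hq_0 r : hq r 0 = 0.
Proof. by rewrite -hqE. Qed.
Lemma hq_not3 r j : ~~ (3 %| j)%N -> hq r j = 0.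
Proof. by move=> h; rewrite -hqE /hp (negbTE h) andbF. Qed.
Lemma hq1E n : hq 1 (3 * n.+1) = bvec F (inr (true, n)).
Proof.
rewrite -hqE /hp (_ : (0 < 3 * n.+1) && (3 %| 3 * n.+1) = true)%N; last by rewrite dvdn_mulr // andbT; lia.
by rewrite mulKn.
Qed.
Lemma hq2E n : hq 2 (3 * n.+1) = bvec F (inr (false, n)).
Proof.
rewrite -hqE /hp (_ : (0 < 3 * n.+1) && (3 %| 3 * n.+1) = true)%N; last by rewrite dvdn_mulr // andbT; lia.
by rewrite mulKn.
Qed.
Lemma hq1_gen m : hq 1 m = if (0 < m)%N && (3 %| m)%N then bvec F (inr (true, (m %/ 3).-1)) else 0.
Proof. by rewrite -hqE /hp; case: ifP. Qed.
Lemma hqE_gen r m : hq r m = if (0 < m)%N && (3 %| m)%N then hq r (3 * (m %/ 3).-1.+1) else 0.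
Proof.
case: ifP => [/andP [m0 m3]|h]; last by rewrite -hqE /hp h.
by rewrite prednK ?divn_gt0 ?(dvdn_leq m0 m3) // mulnC divnK.
Qed.

Lemma res3 (a : int) : ((a %% 3 = 0) \/ (a %% 3 = 1) \/ (a %% 3 = 2))%Z.
Proof. lia. Qed.

Lemma hq_sum3 (a : int) j : hq a j + hq (a + 1) j + hq (a + 2) j = 0.
Proof.
case: (res3 a) => [e|[e|e]].
- rewrite (hq_r0 e) (@hq_r1 (a+1)) ?(@hq_r2 (a+2)); try lia. mring.
- rewrite (hq_r1 e) (@hq_r2 (a+1)) ?(@hq_r0 (a+2)); try lia. mring.
- rewrite (hq_r2 e) (@hq_r0 (a+1)) ?(@hq_r1 (a+2)); try lia. mring.
Qed.

Lemma hs0 : hs F 0 = 0.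
Proof. by []. Qed.
Lemma hsS j : hs F j.+1 = bvec F (inl (inr j)).
Proof. by []. Qed.

Lemma hmul0r (u : H) : hmul u 0 = 0.
Proof. exact: lin0 (isLin_hmul u). Qed.

Lemma hmul_b1 b n : hmul (bvec F b) (hq 1 (3 * n.+1)) = bmul F b (inr (true, n)).
Proof. by rewrite hq1E hmul_bb. Qed.
Lemma hmul_b2 b n : hmul (bvec F b) (hq 2 (3 * n.+1)) = bmul F b (inr (false, n)).
Proof. by rewrite hq2E hmul_bb. Qed.

Ltac bsimp := cbv beta iota zeta delta [bmul pidx hz]; rewrite ?hqE ?absz_diffE.

Lemma SF (r : int) j n : hmul (hs F j) (hq r (3 * n)) =
  (3%:R / 4%:R) *: (hq r j + hq r (3 * n))
  - (3%:R / 8%:R) *: (hq r (dn j (3 * n)) + hq r (j + 3 * n)).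
Proof.
case: j => [|j].
  rewrite hs0 hmul0l hq_0 add0n (_ : dn 0 (3 * n) = (3 * n)%N); last by rewrite dnE; lia.
  mfield.
case: n => [|n].
  rewrite muln0 hq_0 hmul0r addn0 (_ : dn j.+1 0 = j.+1); last by rewrite dnE; lia.
  mfield.
rewrite hsS.
case: (res3 r) => [e|[e|e]].
- rewrite !(hq_r0 e) (linB (isLin_hmul _)) (linN (isLin_hmul _)) hmul_b1 hmul_b2.
  bsimp. mfield.
- rewrite !(hq_r1 e) hmul_b1. by bsimp.
- rewrite !(hq_r2 e) hmul_b2. by bsimp.
Qed.

Lemma AF (r : int) i n : hmul (ha F i) (hq r (3 * n.+1)) =
  (3%:R / 2%:R) *: hq r (3 * n.+1) - hq (- (i + r)) (3 * n.+1).
Proof.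
rewrite /ha.
case: (res3 r) => [e|[e|e]].
- rewrite !(hq_r0 e) (linB (isLin_hmul _)) (linN (isLin_hmul _)) hmul_b1 hmul_b2.
  bsimp.
  have := hq_sum3 (- (i + r)) (3 * n.+1).
  rewrite (@hq_res (- (i + r) + 1) (- (i + 2))) ?(@hq_res (- (i + r) + 2) (- (i + 1))); try lia.
  move=> s0.
  have -> : hq (- (i + r)) (3 * n.+1) = - hq (- (i + 2)) (3 * n.+1) - hq (- (i + 1)) (3 * n.+1).
    rewrite -[LHS]subr0 -{1}s0; mring.
  mfield.
- rewrite !(hq_r1 e) hmul_b1; bsimp; rewrite (@hq_res (- (i + r)) (- (i + 1))) //; lia.
- rewrite !(hq_r2 e) hmul_b2; bsimp; rewrite (@hq_res (- (i + r)) (- (i + 2))) //; lia.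
Qed.

Ltac hnorm := repeat match goal with
 | |- context [hq ?a ?m] =>
   lazymatch a with
   | (1 : int) => fail
   | (2 : int) => fail
   | _ => first [ rewrite (@hq_r1 a); [|lia] | rewrite (@hq_r2 a); [|lia] | rewrite (@hq_r0 a); [|lia] ]
   end
 end.

Lemma PF (c : bool) n' (r : int) n : hmul (bvec F (inr (c, n'))) (hq r (3 * n.+1)) =
  (4%:R^-1) *: ((hq (- (pidx c + r) + 1) (3 * n'.+1) - hq (- (pidx c + r) - 1) (3 * n'.+1))
               + (hq (- (pidx c + r) + 1) (3 * n.+1) - hq (- (pidx c + r) - 1) (3 * n.+1)))
  - (8%:R^-1) *: ((hq (- (pidx c + r) + 1) (dn (3 * n'.+1) (3 * n.+1)) - hq (- (pidx c + r) - 1) (dn (3 * n'.+1) (3 * n.+1)))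
               + (hq (- (pidx c + r) + 1) (3 * n'.+1 + 3 * n.+1) - hq (- (pidx c + r) - 1) (3 * n'.+1 + 3 * n.+1))).
Proof.
case: c; case: (res3 r) => [e|[e|e]];
  rewrite ?(hq_r0 e) ?(hq_r1 e) ?(hq_r2 e) ?(linB (isLin_hmul _)) ?(linN (isLin_hmul _)) ?hmul_b1 ?hmul_b2;
  bsimp; rewrite /pidx; hnorm; mfield.
Qed.

Definition phiB (r : int) (b : HB) : H := match b with inr (_, n) => hq r (3 * n.+1) | _ => 0 end.
Definition phi r := lext (phiB r).

Lemma isLin_phi r : isLin (phi r).
Proof. exact: isLin_lext. Qed.

Lemma lext_zero v : lext (fun _ => 0) v = 0.
Proof. by rewrite /lext big1 // => b _; rewrite scaler0. Qed.

Lemma lext_comb G1 G2 a b v : lext (fun x => a *: G1 x + b *: G2 x) v = a *: lext G1 v + b *: lext G2 v.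
Proof.
rewrite lextG; congr (_ + _).
by rewrite /lext scaler_sumr; apply: eq_bigr => x _; rewrite !scalerA mulrC.
Qed.

Lemma phi_r1 r : (r %% 3 = 1)%Z -> forall v, phi r v = phi 1 v.
Proof. by move=> e v; apply: lext_eq => -[[i|j]|[c n]] _; cbv beta iota delta [phiB]; rewrite ?(hq_r1 e). Qed.
Lemma phi_r2 r : (r %% 3 = 2)%Z -> forall v, phi r v = phi 2 v.
Proof. by move=> e v; apply: lext_eq => -[[i|j]|[c n]] _; cbv beta iota delta [phiB]; rewrite ?(hq_r2 e). Qed.
Lemma phi_r0 r : (r %% 3 = 0)%Z -> forall v, phi r v = - phi 1 v - phi 2 v.
Proof.
move=> e v; rewrite -!scaleN1r -lext_comb; apply: lext_eq => -[[i|j]|[c n]] _; cbv beta iota delta [phiB].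
- by rewrite scaler0 addr0.
- by rewrite scaler0 addr0.
by rewrite (hq_r0 e) !scaleN1r.
Qed.

Lemma phi_b1 r n : phi r (hq 1 (3 * n.+1)) = hq r (3 * n.+1).
Proof. by rewrite hq1E /phi lext_bvec. Qed.

Lemma phi_hq1 r m : phi r (hq 1 m) = hq r m.
Proof.
rewrite hq1_gen (hqE_gen r m); case: ifP => _; last by rewrite /phi lext0.
by rewrite /phi lext_bvec.
Qed.

Lemma C1_bvec n : C1 (bvec F (inr (true, n))).
Proof.
move=> b; rewrite /bvec mcoeffU; case: (inr (true, n) =P b) => [<-|_]; first by exists n.
by rewrite mulr0n eqxx.
Qed.

Lemma C1_hq1 m : C1 (hq 1 m).
Proof. by rewrite hq1_gen; case: ifP => _; [apply: C1_bvec | apply: C10]. Qed.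

Lemma phi1_C1 y : C1 y -> phi 1 y = y.
Proof.
apply: (@C1_ext (phi 1) id); [exact: isLin_phi | by [] |].
by move=> n; rewrite -hq1E phi_b1.
Qed.

Lemma isLin_htau : isLin (@htau F).
Proof. rewrite htauE; exact: isLin_lext. Qed.

Lemma phi2_C1 y : C1 y -> phi 2 y = - htau y.
Proof.
apply: (@C1_ext (phi 2) (fun v => - htau v)); [exact: isLin_phi | |].
  by move=> c u v; rewrite (linD isLin_htau) (linZ isLin_htau); mring.
by move=> n; rewrite htauE lext_bvec; cbv beta iota delta [btau]; rewrite opprK -hq1E phi_b1 hq2E.
Qed.

Lemma isLin_comp f g : isLin f -> isLin g -> isLin (fun v => f (g v)).
Proof. by move=> hf hg c u v; rewrite hg hf. Qed.

Lemma C1_lext G y : (forall b, y@_b != 0 -> C1 (G b)) -> C1 (lext G y).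
Proof.
move=> h; apply: C1_sum => b.
case: (eqVneq y@_b 0) => [->|hb]; first by rewrite scale0r; exact: C10.
by apply: C1Z; apply: h.
Qed.

Local Notation S j := (hmul (hs F j)).

Lemma SC1 j y : C1 y -> C1 (S j y).
Proof.
move=> hy; rewrite (lin_ext (isLin_hmul _)); apply: C1_lext => b /hy [n ->].
rewrite -hq1E (SF 1 j n.+1).
by apply: C1B; apply: C1Z; apply: C1D; apply: C1_hq1.
Qed.

Lemma S_phi j r y : C1 y -> S j (phi r y) = phi r (S j y).
Proof.
apply: (@C1_ext (fun v => S j (phi r v)) (fun v => phi r (S j v))).
- exact: isLin_comp (isLin_hmul _) (isLin_phi _).
- exact: isLin_comp (isLin_phi _) (isLin_hmul _).
move=> n; rewrite -hq1E phi_b1 !SF (linB (isLin_phi _)) !(linZ (isLin_phi _)) !(linD (isLin_phi _)).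
by rewrite !phi_hq1.
Qed.

Lemma S_not3 j y : ~~ (3 %| j)%N -> C1 y -> S j y = (3%:R / 4%:R) *: y.
Proof.
move=> hj; apply: (@C1_ext (S j) (fun v => (3%:R / 4%:R) *: v)).
- exact: isLin_hmul.
- by move=> c u v; mring.
move=> n; rewrite -hq1E SF (hq_not3 _ hj) (@hq_not3 _ (dn j _)) ?(@hq_not3 _ (j + _)).
- mfield.
- rewrite dvdn_addl ?dvdn_mulr //.
- by rewrite dnE; apply/negP => h; move/negP: hj; apply; lia.
Qed.

Lemma A_phi i r y : C1 y -> hmul (ha F i) (phi r y) = (3%:R / 2%:R) *: phi r y - phi (- (i + r)) y.
Proof.
apply: (@C1_ext (fun v => hmul (ha F i) (phi r v)) (fun v => (3%:R / 2%:R) *: phi r v - phi (- (i + r)) v)).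
- exact: isLin_comp (isLin_hmul _) (isLin_phi _).
- by move=> c u v; rewrite !(isLin_phi _ c u v); mring.
by move=> n; rewrite -hq1E !phi_b1 AF.
Qed.

Lemma P_phi c n' r y : C1 y -> hmul (bvec F (inr (c, n'))) (phi r y) =
  (3%:R^-1) *: (phi (- (pidx c + r) + 1) (S (3 * n'.+1) y) - phi (- (pidx c + r) - 1) (S (3 * n'.+1) y)).
Proof.
apply: (@C1_ext (fun v => hmul (bvec F (inr (c, n'))) (phi r v))
  (fun v => (3%:R^-1) *: (phi (- (pidx c + r) + 1) (S (3 * n'.+1) v) - phi (- (pidx c + r) - 1) (S (3 * n'.+1) v)))).
- exact: isLin_comp (isLin_hmul _) (isLin_phi _).
- move=> a u v; rewrite !(isLin_hmul _ a u v) !(isLin_phi _ a). mfield.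
move=> n; rewrite -hq1E phi_b1 PF SF !(linB (isLin_phi _)) !(linZ (isLin_phi _)) !(linD (isLin_phi _)) !phi_hq1.
mfield.
Qed.

Local Notation Q n := (hq 1 (3 * n)).

Lemma SQ a b : S (3 * a) (Q b) = (3%:R / 4%:R) *: (Q a + Q b) - (3%:R / 8%:R) *: (Q (dn a b) + Q (a + b)).
Proof.
rewrite SF (_ : dn (3 * a) (3 * b) = 3 * dn a b)%N; last by rewrite !dnE; lia.
by rewrite mulnDr.
Qed.

Lemma perm3 (q : nat -> H) x1 x2 x3 y1 y2 y3 :
  (x1 = y1 /\ x2 = y2 /\ x3 = y3) \/ (x1 = y1 /\ x2 = y3 /\ x3 = y2) \/
  (x1 = y2 /\ x2 = y1 /\ x3 = y3) \/ (x1 = y2 /\ x2 = y3 /\ x3 = y1) \/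
  (x1 = y3 /\ x2 = y1 /\ x3 = y2) \/ (x1 = y3 /\ x2 = y2 /\ x3 = y1) ->
  q x1 + q x2 + q x3 = q y1 + q y2 + q y3.
Proof.
by case=> [[e1 [e2 e3]]|[[e1 [e2 e3]]|[[e1 [e2 e3]]|[[e1 [e2 e3]]|[[e1 [e2 e3]]|[e1 [e2 e3]]]]]]];
  rewrite e1 e2 e3; mring.
Qed.

Lemma mset (q : nat -> H) a b d :
  q (dn a (dn b d)) + q (a + dn b d) + q (dn a (b + d)) =
  q (dn (dn a b) d) + q (dn a b + d) + q (dn (a + b) d).
Proof. by apply: perm3; apply: msetN; rewrite !dnE. Qed.

Lemma cheb a b d : S (3 * a) (S (3 * b) (Q d)) =
  (3%:R / 4%:R) *: (S (3 * a) (Q d) + S (3 * b) (Q d))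
  - (3%:R / 8%:R) *: (S (3 * dn a b) (Q d) + S (3 * (a + b)) (Q d)).
Proof.
rewrite (SQ b d) (linB (isLin_hmul _)) !(linZ (isLin_hmul _)) !(linD (isLin_hmul _)) !SQ !addnA.
have M : Q (dn a (dn b d)) + Q (a + dn b d) + Q (dn a (b + d)) =
  Q (dn (dn a b) d) + Q (dn a b + d) + Q (dn (a + b) d) := mset (fun n => Q n) a b d.
have e : Q (dn a (dn b d)) = Q (dn (dn a b) d) + Q (dn a b + d) + Q (dn (a + b) d)
   - Q (a + dn b d) - Q (dn a (b + d)) by rewrite -M; mring.
rewrite e; mfield.
Qed.

Lemma lin_eq_sum f g (s : seq nat) (w : nat -> F) : isLin f -> isLin g ->
  (forall d, f (Q d) = g (Q d)) -> f (\sum_(j <- s) w j *: Q j) = g (\sum_(j <- s) w j *: Q j).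
Proof.
move=> hf hg e; rewrite (lin_sum _ _ hf) (lin_sum _ _ hg).
by apply: eq_bigr => j _; rewrite (linZ hf) (linZ hg) e.
Qed.

Variable k : nat.
Variable beta : nat -> F.
Hypothesis hk : (0 < k)%N.
Hypothesis hbeta : beta k != 0.

Definition xq : H := \sum_(1 <= j < k.+1) beta j *: Q j.

Lemma cheb_x a b : S (3 * a) (S (3 * b) xq) =
  (3%:R / 4%:R) *: (S (3 * a) xq + S (3 * b) xq)
  - (3%:R / 8%:R) *: (S (3 * dn a b) xq + S (3 * (a + b)) xq).
Proof.
apply: (@lin_eq_sum (fun v => S (3 * a) (S (3 * b) v))
   (fun v => (3%:R / 4%:R) *: (S (3 * a) v + S (3 * b) v)
       - (3%:R / 8%:R) *: (S (3 * dn a b) v + S (3 * (a + b)) v))).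
- exact: isLin_comp (isLin_hmul _) (isLin_hmul _).
- by move=> c u v; rewrite !(isLin_hmul _ c u v); mring.
exact: cheb.
Qed.

Lemma C1_x : C1 xq.
Proof. by apply: C1_sum => j; apply: C1Z; apply: C1_hq1. Qed.

Definition Yf (o : option nat) : H := match o with None => xq | Some n => S (3 * n.+1) xq end.
Local Notation fam := (ideal_family xq).

Lemma famE t : fam t = if t.1 then htau (Yf t.2) else Yf t.2.
Proof. by case: t => [[] [n|]]. Qed.

Lemma C1_Y o : C1 (Yf o).
Proof. case: o => [n|] /=; [apply: SC1|]; exact: C1_x. Qed.

Definition inW (v : H) := exists L : seq ((bool * option nat) * F), v = \sum_(p <- L) p.2 *: fam p.1.

Lemma inW0 : inW 0.
Proof. by exists [::]; rewrite big_nil. Qed.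
Lemma inWf t : inW (fam t).
Proof. by exists [:: (t, 1)]; rewrite big_seq1 scale1r. Qed.
Lemma inWD u v : inW u -> inW v -> inW (u + v).
Proof. by move=> [L1 ->] [L2 ->]; exists (L1 ++ L2); rewrite big_cat. Qed.
Lemma inWZ c u : inW u -> inW (c *: u).
Proof.
move=> [L ->]; exists [seq (p.1, c * p.2) | p <- L]; rewrite big_map scaler_sumr.
by apply: eq_bigr => p _; rewrite scalerA.
Qed.
Lemma inWN u : inW u -> inW (- u).
Proof. by move=> h; rewrite -scaleN1r; apply: inWZ. Qed.
Lemma inWB u v : inW u -> inW v -> inW (u - v).
Proof. by move=> hu hv; apply: inWD => //; apply: inWN. Qed.
Lemma inW_sum (I : Type) (s : seq I) (g : I -> H) : (forall i, inW (g i)) -> inW (\sum_(i <- s) g i).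
Proof. by move=> h; elim: s => [|a s IH]; rewrite ?big_nil ?big_cons; [exact: inW0 | apply: inWD]. Qed.

Definition YW (v : H) := C1 v /\ forall r, inW (phi r v).

Lemma YW0 : YW 0.
Proof. by split; [exact: C10 | move=> r; rewrite (lin0 (isLin_phi r)); exact: inW0]. Qed.
Lemma YWD u v : YW u -> YW v -> YW (u + v).
Proof.
move=> [hu1 hu2] [hv1 hv2]; split; first exact: C1D.
by move=> r; rewrite (linD (isLin_phi r)); apply: inWD.
Qed.
Lemma YWZ c u : YW u -> YW (c *: u).
Proof.
move=> [hu1 hu2]; split; first exact: C1Z.
by move=> r; rewrite (linZ (isLin_phi r)); apply: inWZ.
Qed.
Lemma YWB u v : YW u -> YW v -> YW (u - v).
Proof. by move=> hu hv; apply: YWD => //; rewrite -scaleN1r; apply: YWZ. Qed.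

Lemma YW_Y o : YW (Yf o).
Proof.
split; first exact: C1_Y.
have f0 : Yf o = fam (false, o) by rewrite famE.
have f1 : htau (Yf o) = fam (true, o) by rewrite famE.
move=> r; case: (res3 r) => [e|[e|e]].
- rewrite (phi_r0 e) (phi1_C1 (@C1_Y o)) (phi2_C1 (@C1_Y o)) opprK f0 f1.
  by apply: inWD; [apply: inWN|]; apply: inWf.
- by rewrite (phi_r1 e) (phi1_C1 (@C1_Y o)) f0; apply: inWf.
- by rewrite (phi_r2 e) (phi2_C1 (@C1_Y o)) f1; apply: inWN; apply: inWf.
Qed.

Lemma YW_Sx e : YW (S (3 * e) xq).
Proof.
case: e => [|e]; first by rewrite muln0 hs0 hmul0l; exact: YW0.
exact: (YW_Y (Some e)).
Qed.

Lemma YW_S j o : YW (S j (Yf o)).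
Proof.
case: (boolP (3 %| j)%N) => hj; last first.
  by rewrite (S_not3 hj (@C1_Y o)); apply: YWZ; apply: YW_Y.
rewrite -(divnK hj) mulnC.
case: o => [n|]; last exact: YW_Sx.
rewrite /Yf cheb_x.
by apply: YWB; apply: YWZ; apply: YWD; apply: YW_Sx.
Qed.

Definition YW2 (v : H) := YW v /\ forall j, YW (S j v).

Lemma YW2_Y o : YW2 (Yf o).
Proof. by split; [apply: YW_Y | move=> j; apply: YW_S]. Qed.

Lemma key_mul b r y : YW2 y -> inW (hmul (bvec F b) (phi r y)).
Proof.
move=> [[hy1 hy2] hS].
case: b => [[i|n]|[c n']].
- rewrite (_ : bvec F (inl (inl i)) = ha F i) // (A_phi _ _ hy1).
  by apply: inWB; [apply: inWZ|]; apply: hy2.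
- rewrite -hsS (S_phi _ _ hy1); by case: (hS n.+1).
- rewrite (P_phi _ _ _ hy1); apply: inWZ; apply: inWB; by case: (hS (3 * n'.+1)).
Qed.

Lemma fam_phi t : fam t = if t.1 then - phi 2 (Yf t.2) else phi 1 (Yf t.2).
Proof.
by rewrite famE (phi1_C1 (@C1_Y _)) (phi2_C1 (@C1_Y _)) opprK.
Qed.

Lemma inW_bf b t : inW (hmul (bvec F b) (fam t)).
Proof.
rewrite fam_phi; case: t.1.
- by rewrite (linN (isLin_hmul _)); apply: inWN; apply: key_mul; apply: YW2_Y.
- by apply: key_mul; apply: YW2_Y.
Qed.

Lemma inW_vf v t : inW (hmul v (fam t)).
Proof.
rewrite (lin_ext (isLin_hmull (fam t))) /lext.
by apply: inW_sum => b; apply: inWZ; apply: inW_bf.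
Qed.

Lemma inW_mul u v : inW u -> inW (hmul v u).
Proof.
move=> [L ->]; rewrite (lin_sum _ _ (isLin_hmul v)).
by apply: inW_sum => p; rewrite (linZ (isLin_hmul v)); apply: inWZ; apply: inW_vf.
Qed.

Lemma ideal_inW : is_ideal inW.
Proof.
split.
- exact: inW0.
- exact: inWD.
- exact: inWZ.
- move=> u v; exact: inW_mul.
Qed.

Lemma inW_x : inW xq.
Proof. by have := inWf (false, None); rewrite famE. Qed.

Lemma sum_delta (I : eqType) (s : seq I) (t : I) (a : F) :
  uniq s -> t \in s -> \sum_(i <- s) (if t == i then a else 0) = a.
Proof.
move=> us ts; rewrite (bigD1_seq t) //= eqxx big1 ?addr0 // => i /negbTE.
by rewrite eq_sym => ->.
Qed.

Lemma inW_span y : inW y -> in_span fam y.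
Proof.
move=> [L ->].
exists (undup (map fst L)), (fun t => \sum_(p <- L | p.1 == t) p.2).
under [RHS]eq_bigr do rewrite scaler_suml.
rewrite (exchange_big_dep predT) //=.
apply: eq_big_seq => p pL.
rewrite -big_filter.
have -> : [seq i <- undup [seq p.1 | p <- L] | p.1 == i] = [:: p.1].
  rewrite -(@filter_pred1_uniq _ (undup [seq p.1 | p <- L]) p.1) ?undup_uniq //.
    by apply: eq_filter => i; rewrite eq_sym.
  by rewrite mem_undup; apply: map_f.
by rewrite big_seq1.
Qed.

Lemma tau_A y : C1 y -> htau y = hmul (ha F 0) y - (3%:R / 2%:R) *: y.
Proof.
move=> hy; have := A_phi 0 1 hy.
rewrite (@phi_r2 (- (0 + 1))) // (phi1_C1 hy) (phi2_C1 hy) opprK => ->; mring.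
Qed.

Lemma span_ideal y : in_span fam y -> gen_ideal xq y.
Proof.
move=> [l [c ->]] J [J0 JD JZ JM] Jx.
have JY o : J (Yf o) by case: o => [n|] //=; apply: JM.
have Jf t : J (fam t).
  rewrite famE; case: t.1 => //.
  rewrite (tau_A (@C1_Y _)); apply: JD; first exact: JM.
  by rewrite -scaleNr; apply: JZ.
elim: l => [|a l IH]; first by rewrite big_nil.
by rewrite big_cons; apply: JD => //; apply: JZ.
Qed.

Lemma mcoeff_sum (I : Type) (s : seq I) (g : I -> H) t : (\sum_(i <- s) g i)@_t = \sum_(i <- s) (g i)@_t.
Proof. by elim: s => [|a s IH]; rewrite ?big_nil ?big_cons ?mcoeff0 // mcoeffD IH. Qed.

Lemma mcoeff_lext G v t : (lext G v)@_t = \sum_(b <- msupp v) v@_b * (G b)@_t.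
Proof. by rewrite /lext mcoeff_sum; apply: eq_bigr => b _; rewrite mcoeffZ. Qed.

Lemma bvec_coef b t : (bvec F b)@_t = (b == t)%:R.
Proof. by rewrite /bvec mcoeffU. Qed.

Lemma coef_delta (v : H) t : \sum_(b <- msupp v) v@_b * (b == t)%:R = v@_t.
Proof.
case: (boolP (t \in msupp v)) => ht.
  rewrite (bigD1_seq t) ?fset_uniq //= eqxx mulr1 big1 ?addr0 // => b /negbTE ->.
  by rewrite mulr0.
rewrite big1_seq ?(mcoeff_outdom ht) // => b /andP [_ hb].
by rewrite (_ : (b == t) = false) ?mulr0 //; apply/negbTE; apply: contraNneq ht => <-.
Qed.

Lemma tau_coef (v : H) c d : (htau v)@_(inr (c, d)) = - v@_(inr (~~ c, d)).
Proof.
rewrite htauE mcoeff_lext -coef_delta -sumrN; apply: eq_bigr => b _.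
rewrite -mulrN; congr (_ * _).
case: b => [[i|n]|[b n]]; cbv beta iota delta [btau].
- by rewrite /ha bvec_coef oppr0.
- by rewrite bvec_coef oppr0.
rewrite mcoeffN bvec_coef; congr (- _%:R).
by case: b; case: c.
Qed.

Ltac pushco := repeat match goal with |- context [mcoeff ?k ?E] =>
  lazymatch E with
  | _ + _ => let p := coeff k E in rewrite p
  | - _ => let p := coeff k E in rewrite p
  | _ *: _ => let p := coeff k E in rewrite p
  end end.

Lemma hq1_coef (m d : nat) : (hq 1 m)@_(inr (true, d)) = (m == 3 * d.+1)%N%:R.
Proof.
rewrite hq1_gen; case: ifP => [/andP [m0 m3]|hm].
  rewrite bvec_coef.
  have -> : (inr (true, (m %/ 3).-1) == inr (true, d) :> HB) = (m == 3 * d.+1)%N; last by [].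
  case: eqP => [H|H]; case: eqP => [H'|H'] //.
    by injection H => e; case: H'; rewrite -e prednK ?divn_gt0 ?(dvdn_leq m0 m3) // mulnC divnK.
  by case: H; rewrite H' mulKn.
by rewrite mcoeff0; case: eqP => // e; move: hm; rewrite e dvdn_mulr // andbT.
Qed.

Lemma C1_false v d : C1 v -> v@_(inr (false, d)) = 0.
Proof. by move=> hv; apply/eqP; apply/negP => /negP /hv [n]. Qed.

Lemma sum_last (w : nat -> F) : (forall j, (1 <= j < k)%N -> w j = 0) ->
  \sum_(1 <= j < k.+1) beta j * w j = beta k * w k.
Proof.
move=> wz; rewrite big_nat_recr //= big_nat_cond big1 ?add0r // => j /andP [/andP [j1 jk] _].
by rewrite wz ?mulr0 // j1 jk.
Qed.

Definition degO (o : option nat) := match o with None => k.-1 | Some n => (n + k)%N end.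
Definition lc (o : option nat) : F := match o with None => beta k | Some n => - (3%:R / 8%:R) * beta k end.

Lemma lc_neq0 o : lc o != 0.
Proof.
case: o => [n|] //=; rewrite mulf_neq0 // oppr_eq0 mulf_neq0 // ?invr_eq0 ?h8 //.
Qed.

Lemma degO_inj o o' : (degO o == degO o') = (o == o').
Proof.
case: o => [n|]; case: o' => [n'|] //=; apply/eqP/eqP => //; try lia.
- by move=> e; congr Some; lia.
- by case=> ->.
Qed.

Lemma x_coef d : (xq)@_(inr (true, d)) = \sum_(1 <= j < k.+1) beta j * (3 * j == 3 * d.+1)%N%:R.
Proof. by rewrite /xq mcoeff_sum; apply: eq_bigr => j _; rewrite mcoeffZ hq1_coef. Qed.

Lemma Y_coef o d : (degO o <= d)%N -> (Yf o)@_(inr (true, d)) = if d == degO o then lc o else 0.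
Proof.
case: o => [n|] /= hd.
- rewrite /xq (lin_sum _ _ (isLin_hmul _)) mcoeff_sum.
  under eq_bigr do rewrite (linZ (isLin_hmul _)) SQ mcoeffZ.
  rewrite sum_last; last first.
    move=> j /andP [j1 jk]; pushco; rewrite !hq1_coef.
    rewrite (_ : (3 * n.+1 == 3 * d.+1)%N = false); last by apply/negbTE/eqP; lia.
    rewrite (_ : (3 * j == 3 * d.+1)%N = false); last by apply/negbTE/eqP; lia.
    rewrite (_ : (3 * dn n.+1 j == 3 * d.+1)%N = false); last by apply/negbTE/eqP; rewrite dnE; lia.
    rewrite (_ : (3 * (n.+1 + j) == 3 * d.+1)%N = false); last by apply/negbTE/eqP; lia.
    by rewrite /nat_of_bool; ring.
  pushco; rewrite !hq1_coef.
  rewrite (_ : (3 * n.+1 == 3 * d.+1)%N = false); last by apply/negbTE/eqP; lia.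
  rewrite (_ : (3 * k == 3 * d.+1)%N = false); last by apply/negbTE/eqP; lia.
  rewrite (_ : (3 * dn n.+1 k == 3 * d.+1)%N = false); last by apply/negbTE/eqP; rewrite dnE; lia.
  rewrite (_ : (3 * (n.+1 + k) == 3 * d.+1)%N = (d == n + k)%N); last by apply/eqP/eqP; lia.
  case: (d == n + k)%N; rewrite /lc /nat_of_bool /=; field; rewrite ?h4 ?h8 //.
- rewrite x_coef sum_last; last first.
    move=> j /andP [j1 jk]; rewrite (_ : (3 * j == 3 * d.+1)%N = false) ?mulr0 //.
    by apply/negbTE/eqP; lia.
  rewrite (_ : (3 * k == 3 * d.+1)%N = (d == k.-1)); last by apply/eqP/eqP; lia.
  by case: (d == k.-1); rewrite ?mulr1 ?mulr0.
Qed.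

Definition lead (t : bool * option nat) : HB := inr (~~ t.1, degO t.2).

Lemma fam_coef t t' : (degO t.2 <= degO t'.2)%N ->
  (fam t)@_(lead t') = if t == t' then (if t.1 then -1 else 1) * lc t.2 else 0.
Proof.
case: t => b o; case: t' => b' o' hd; rewrite famE /lead.
rewrite [(b, o).1]/= [(b, o).2]/= [(b', o').1]/= [(b', o').2]/= in hd *.
rewrite xpair_eqE -degO_inj [(degO o == _)]eq_sym.
case: b; case: b'; rewrite ?andTb ?andFb ?eqxx.
- by rewrite tau_coef Y_coef //; case: (degO o' == degO o); rewrite ?mulN1r ?oppr0.
- by rewrite tau_coef (C1_false _ (@C1_Y o)) oppr0.
- by rewrite (C1_false _ (@C1_Y o)).
- by rewrite Y_coef //; case: (degO o' == degO o); rewrite ?mul1r.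
Qed.

Lemma lin_indep_fam : lin_indep fam.
Proof.
move=> l c ul hs.
have key n : (forall t, t \in l -> (n < degO t.2)%N -> c t = 0) ->
    forall t, t \in l -> degO t.2 = n -> c t = 0.
  move=> hgt t0 t0l e0.
  have := congr1 (mcoeff (lead t0)) hs; rewrite mcoeff0 mcoeff_sum.
  rewrite (bigD1_seq t0) //= big1_seq ?addr0; last first.
    move=> t /andP [ne tl]; case: (ltnP n (degO t.2)) => h.
      by rewrite mcoeffZ hgt // mul0r.
    by rewrite mcoeffZ fam_coef ?e0 // (negbTE ne) mulr0.
  rewrite mcoeffZ fam_coef // eqxx => /eqP; rewrite mulf_eq0 => /orP [/eqP //|].
  rewrite mulf_eq0 (negbTE (lc_neq0 _)) orbF.
  by case: t0.1; rewrite ?oppr_eq0 oner_eq0.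
set D := \max_(t <- l) degO t.2.
have hD t : t \in l -> (degO t.2 <= D)%N by move=> tl; apply: leq_bigmax_seq.
have main m : forall t, t \in l -> (D - m <= degO t.2)%N -> c t = 0.
  elim: m => [|m IH] t tl ht.
    apply: (key D) => //; last by have := hD t tl; lia.
    by move=> t' t'l h'; have := hD t' t'l; lia.
  case: (leqP (D - m) (degO t.2)) => h; first exact: IH.
  apply: (key (degO t.2)) => // t' t'l h'; apply: IH => //; lia.
by move=> t tl; apply: (main D) => //; lia.
Qed.

Lemma main_basis : is_basis_of_ideal fam xq.
Proof.
split; first exact: lin_indep_fam.
move=> y; split; first exact: span_ideal.
move=> hy; apply: inW_span; apply: hy; [exact: ideal_inW | exact: inW_x].
Qed.
End Work.

Unset Implicit Arguments.

Theorem theorem7p2 (F : fieldType) (hchar2 : (2%:R : F) != 0)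
  (hchar3 : (3%:R : F) != 0) (k : nat) (hk : (0 < k)%N)
  (beta : nat -> F) (hbeta : beta k != 0) :
  let x : Hh F := \sum_(1 <= j < k.+1) beta j *: hp F 1 (3 * j) in
  is_basis_of_ideal (ideal_family x) x.
Proof.
move=> x; rewrite /x (hqE F).
exact: (main_basis hchar2 hchar3 hk hbeta).
Qed.
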